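(* Let $m\ge n$, $1\le r\le n$, $\delta=r/n$, $\mu\in[0,1)$, $\tau\in\mathbb{Z}_{\ge1}$, $\eta>0$, and suppose Assumption (A3) holds. Then the error terms $\bm e_t^{(i)}$ of PowerSGD+ with MSGD satisfy, for every $t\ge0$, $$\mathbb{E}\Big\|\frac1N\sum_{i=1}^N\bm e_t^{(i)}\Big\|_F^2\le\frac{45\tau^2G^2}{\delta^2}.$$
   Context: Setting: $N$ nodes jointly minimize $f(\bm{X})=\frac1N\sum_{i=1}^N f_i(\bm{X})$ over $\bm{X}\in\mathbb{R}^{m\times n}$, where $f_i(\bm{X})=\mathbb{E}_{\xi^{(i)}\sim\mathcal{D}_i}[F(\bm{X};\xi^{(i)})]$; node $i$ queries stochastic gradients $\nabla F(\bm{X};\xi^{(i)})$, sampled independently across nodes and iterations. Assumption (A3): $\|\nabla f(\bm{X})\|_F^2\le\omega^2$ for all $\bm X$, and $\mathbb{E}\|\frac1N\sum_{i=1}^N\nabla F(\bm{X};\xi^{(i)})\|_F^2\le G^2:=\sigma^2+\omega^2$ for all $\bm X$, where $\sigma^2$ bounds the variance $\mathbb{E}\|\nabla F(\bm{X};\xi^{(i)})-\nabla f_i(\bm{X})\|_F^2$ for all $i$ and $\bm X$. $\mathrm{QR}(\bm A)$, for $\bm A\in\mathbb{R}^{m\times r}$, denotes the factor $\bm Q\in\mathbb{R}^{m\times r}$ with $\bm Q^\top\bm Q=I_r$ of an economic QR decomposition $\bm A=\bm Q\bm R$. PowerSGD+ with MSGD (step size $\eta$, momentum $\mu$, restart period $\tau$,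 rank $r$): initialize $\bm X_0$, $\bm Q_{-1}\in\mathbb{R}^{n\times r}$, $\bm m_{-1}=0$, $\bm e_0^{(i)}=0$. For $t=0,1,\dots$: each node computes $\bm g_t^{(i)}=\nabla F(\bm X_t;\xi_t^{(i)})$ and $\bm\Delta_t^{(i)}=\bm g_t^{(i)}+\bm e_t^{(i)}$; let $\bm\Delta_t=\frac1N\sum_i\bm\Delta_t^{(i)}$. If $t\not\equiv0\pmod\tau$: $\tilde{\bm P}_t=\mathrm{QR}\big(\frac1N\sum_i\bm\Delta_t^{(i)}\bm Q_{t-1}\big)$; if $t\equiv0\pmod\tau$: $\tilde{\bm P}_t$ is the matrix of the top-$r$ left singular vectors of $\bm\Delta_t$. In both cases $\bm Q_t=\frac1N\sum_i(\bm\Delta_t^{(i)})^\top\tilde{\bm P}_t$, $\widehat{\bm\Delta}_t^{(i)}=\tilde{\bm P}_t\tilde{\bm P}_t^\top\bm\Delta_t^{(i)}$, $\widehat{\bm\Delta}_t=\tilde{\bm P}_t\bm Q_t^\top$, $\bm e_{t+1}^{(i)}=\bm\Delta_t^{(i)}-\widehat{\bm\Delta}_t^{(i)}$, $\bm m_t=\mu\bm m_{t-1}+\widehat{\bm\Delta}_t$, $\bm X_{t+1}=\bm X_t-\eta\bm m_t$. *)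

(* Defs.v *)
From HB Require Import structures.
From mathcomp Require Import all_boot all_order all_algebra.
From mathcomp Require Import all_classical all_reals all_analysis.

Set Implicit Arguments.
Unset Strict Implicit.
Unset Printing Implicit Defensive.

Import Order.TTheory GRing.Theory Num.Theory.
Local Open Scope classical_set_scope.
Local Open Scope ring_scope.

Section PowerSGDDefs.
Variable R : realType.

Definition frob2 (p q : nat) (A : 'M[R]_(p, q)) : R :=
  \sum_(i < p) \sum_(j < q) (A i j) ^+ 2.

Definition is_QR_factor (p k : nat) (A Q : 'M[R]_(p, k)) : Prop :=
  Q^T *m Q = 1%:M /\
  exists Rm : 'M[R]_k,
    (forall i j : 'I_k, (j < i)%N -> Rm i j = 0) /\ A = Q *m Rm.

Definition is_top_left_sv (p q k : nat) (D : 'M[R]_(p, q)) (P : 'M[R]_(p, k))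
  : Prop :=
  exists (U : 'M[R]_p) (S : 'M[R]_(p, q)) (V : 'M[R]_q),
    U^T *m U = 1%:M /\ V^T *m V = 1%:M /\
        D = U *m S *m V^T /\
        (forall (i : 'I_p) (j : 'I_q), (i : nat) <> j -> S i j = 0) /\
        (forall (i : 'I_p) (j : 'I_q), (i : nat) = j -> 0 <= S i j) /\
        (forall (i1 i2 : 'I_p) (j1 j2 : 'I_q), (i1 : nat) = j1 -> (i2 : nat) = j2 ->
            (i1 <= i2)%N -> S i2 j2 <= S i1 j1) /\
        (forall (a : 'I_p) (j : 'I_k) (c : 'I_p), (c : nat) = j -> P a j = U a c).

Definition mx_measurable d (T : measurableType d) (p q : nat)
  (f : T -> 'M[R]_(p, q)) : Prop :=
  forall (a : 'I_p) (b : 'I_q), measurable_fun setT (fun x => f x a b).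

(** Borel measurability of a matrix map, phrased through compositions
    with measurable random matrices. *)
Definition mx_borel (p q p' q' : nat) (phi : 'M[R]_(p, q) -> 'M[R]_(p', q'))
  : Prop :=
  forall d (T : measurableType d) (f : T -> 'M[R]_(p, q)),
    mx_measurable f -> mx_measurable (fun x => phi (f x)).

Definition oracle_measurable dX (Xi : measurableType dX) (p q : nat)
  (gF : 'M[R]_(p, q) -> Xi -> 'M[R]_(p, q)) : Prop :=
  forall d (T : measurableType d) (f : T -> 'M[R]_(p, q)) (z : T -> Xi),
    mx_measurable f -> measurable_fun setT z ->
    mx_measurable (fun x => gF (f x) (z x)).

Definition mutually_independent d (Om : measurableType d) (P : probability Om R)
  dX (Xi : measurableType dX) (N : nat) (xi : 'I_N -> Om -> Xi) : Prop :=
  forall A : 'I_N -> set Xi, (forall i, measurable (A i)) ->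
    P (\bigcap_(i in [set: 'I_N]) (xi i @^-1` A i)) =
    (\prod_(i < N) P (xi i @^-1` A i))%E.

(** state of PowerSGD+ before iteration t : (X_t, Q_{t-1}, m_{t-1}, (e_t^(i))_i) *)
Record pstate (m n r N : nat) := PState {
  pX : 'M[R]_(m, n);
  pQ : 'M[R]_(n, r);
  pM : 'M[R]_(m, n);
  pE : 'I_N -> 'M[R]_(m, n) }.

Variables (m n r N tau : nat) (eta mu : R).
Variables (dX : measure_display) (Xi : measurableType dX).
Variable gradF : 'M[R]_(m, n) -> Xi -> 'M[R]_(m, n).
Variable qrf : 'M[R]_(m, r) -> 'M[R]_(m, r).
Variable svf : 'M[R]_(m, n) -> 'M[R]_(m, r).

Definition pstep (t : nat) (st : pstate m n r N) (xs : 'I_N -> Xi)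
  : pstate m n r N :=
  let Di := fun i => gradF (pX st) (xs i) + pE st i in
  let D := (N%:R)^-1 *: \sum_(i < N) Di i in
  let Pt := if (t %% tau == 0)%N then svf D
            else qrf ((N%:R)^-1 *: \sum_(i < N) (Di i *m pQ st)) in
  let Qt := (N%:R)^-1 *: \sum_(i < N) ((Di i)^T *m Pt) in
  let hatD := Pt *m Qt^T in
  let Mt := mu *: pM st + hatD in
  PState (pX st - eta *: Mt) Qt Mt (fun i => Di i - Pt *m Pt^T *m Di i).

Variables (dO : measure_display) (Om : measurableType dO) (P : probability Om R).
Variable xi : 'I_N -> Om -> Xi.

Fixpoint prun (t0 : nat) (st : pstate m n r N) (l : seq Om) : pstate m n r N :=
  match l with
  | [::] => st
  | w :: l' => prun t0.+1 (pstep t0 st (fun i => xi i w)) l'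
  end.

(** expectation over k independent rounds (iterated integrals = product law) *)
Fixpoint iterE (k : nat) (h : seq Om -> \bar R) : \bar R :=
  match k with
  | 0 => h [::]
  | k'.+1 => (\int[P]_w iterE k' (fun l => h (w :: l)))%E
  end.

Definition gradf (i : 'I_N) (X : 'M[R]_(m, n)) : 'M[R]_(m, n) :=
  \matrix_(a, b) Rintegral P setT (fun w => gradF X (xi i w) a b).

End PowerSGDDefs.

(* Main.v *)
Require Import Defs.
From HB Require Import structures.
From mathcomp Require Import all_boot all_order all_algebra.
From mathcomp Require Import all_classical all_reals all_analysis.
From mathcomp Require Import ring lra zify.
Import Order.TTheory GRing.Theory Num.Theory.
Local Open Scope classical_set_scope.
Local Open Scope ring_scope.
Set Implicit Arguments.
Unset Strict Implicit.
Lemma frob2_tr (R : realType) p q (A : 'M[R]_(p, q)) : frob2 A = \tr (A *m A^T).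
Proof.
rewrite /frob2 /mxtrace; apply: eq_bigr => i _; rewrite mxE; apply: eq_bigr => j _.
by rewrite mxE expr2.
Qed.
Lemma frob2_trT (R : realType) p q (A : 'M[R]_(p, q)) : frob2 A = \tr (A^T *m A).
Proof. by rewrite frob2_tr mxtrace_mulC. Qed.
Lemma frob2_ge0 (R : realType) p q (A : 'M[R]_(p, q)) : 0 <= frob2 A.
Proof. by apply: sumr_ge0 => i _; apply: sumr_ge0 => j _; exact: sqr_ge0. Qed.
Lemma frob2_young (R : realType) p q (A B : 'M[R]_(p, q)) (g : R) : 0 < g ->
  frob2 (A + B) <= (1 + g) * frob2 A + (1 + g^-1) * frob2 B.
Proof.
move=> g0; rewrite /frob2 !mulr_sumr -big_split /=; apply: ler_sum => i _.
rewrite !mulr_sumr -big_split /=; apply: ler_sum => j _; rewrite mxE.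
set a := A i j; set b := B i j.
have h : 0 <= (g * a - b) ^+ 2 / g by apply: divr_ge0 => //; [exact: sqr_ge0| exact: ltW].
have e : (1 + g) * a ^+ 2 + (1 + g^-1) * b ^+ 2 - (a + b) ^+ 2 = (g * a - b) ^+ 2 / g.
  by field; rewrite gt_eqF.
by rewrite -subr_ge0 e.
Qed.
Lemma frob2_mulU (R : realType) p q (U : 'M[R]_p) (B : 'M[R]_(p, q)) :
  U^T *m U = 1%:M -> frob2 (U *m B) = frob2 B.
Proof.
move=> hU; rewrite !frob2_trT trmx_mul -mulmxA (mulmxA U^T) hU mul1mx //.
Qed.
Lemma frob2_mulVT (R : realType) p q (V : 'M[R]_q) (B : 'M[R]_(p, q)) :
  V^T *m V = 1%:M -> frob2 (B *m V^T) = frob2 B.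
Proof.
move=> hV; rewrite !frob2_tr trmx_mul trmxK -mulmxA (mulmxA V^T) hV mul1mx //.
Qed.
Lemma frob2_proj (R : realType) p q k (P : 'M[R]_(p, k)) (Y : 'M[R]_(p, q)) :
  P^T *m P = 1%:M -> frob2 (Y - P *m P^T *m Y) = frob2 Y - frob2 (P^T *m Y).
Proof.
move=> hP; rewrite -mulmxA; set Z := P^T *m Y.
rewrite !frob2_trT -linearB; congr (\tr _).
have hYP : Y^T *m P = Z^T by rewrite /Z trmx_mul trmxK.
have -> : (Y - P *m Z)^T = Y^T - Z^T *m P^T by rewrite linearB /= trmx_mul.
rewrite mulmxBl !mulmxBr mulmxA hYP.
rewrite -(mulmxA Z^T P^T Y) -/Z -(mulmxA Z^T P^T (P *m Z)) (mulmxA P^T P Z) hP mul1mx.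
by rewrite subrr subr0.
Qed.
Lemma diag_bound (R : realType) m n r (S : 'M[R]_(m.+1, n.+1)) :
  (n <= m)%N -> (1 <= r)%N -> (r <= n.+1)%N ->
  (forall (i : 'I_m.+1) (j : 'I_n.+1), (i : nat) <> j -> S i j = 0) ->
  (forall (i : 'I_m.+1) (j : 'I_n.+1), (i : nat) = j -> 0 <= S i j) ->
  (forall (i1 i2 : 'I_m.+1) (j1 j2 : 'I_n.+1), (i1 : nat) = j1 -> (i2 : nat) = j2 ->
            (i1 <= i2)%N -> S i2 j2 <= S i1 j1) ->
  (r%:R / (n.+1)%:R) * frob2 S <=
    \sum_(j < r) \sum_(b < n.+1) S (inord j) b ^+ 2.
Proof.
move=> hnm hr1 hrn hdiag hnn hord.
pose g (k : nat) := \sum_(b < n.+1) S (inord k) b ^+ 2.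
have g0 k : 0 <= g k by apply: sumr_ge0 => b _; exact: sqr_ge0.
have F1 : frob2 S = \sum_(0 <= k < m.+1) g k.
  by rewrite big_mkord; apply: eq_bigr => i _; rewrite /g inord_val.
have F3 k : (n.+1 <= k)%N -> (k < m.+1)%N -> g k = 0.
  move=> h1 h2; apply: big1 => b _; rewrite hdiag ?expr0n //.
  rewrite inordK // => e; move: (ltn_ord b); rewrite -e; lia.
have F4 k : (k < n.+1)%N -> g k = S (inord k) (inord k) ^+ 2.
  move=> hk; rewrite /g (bigD1 (inord k)) //= big1 ?addr0 // => b hb.
  rewrite hdiag ?expr0n // inordK; last lia.
  move=> e; move/eqP: hb; apply; apply: val_inj => /=; rewrite inordK //.
have F5 k1 k2 : (k1 <= k2)%N -> (k2 < n.+1)%N -> g k2 <= g k1.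
  move=> h12 h2; rewrite !F4 //; last lia.
  have hk1 : (k1 < n.+1)%N by lia.
  have a0 : 0 <= S (inord k2) (inord k2) by apply: hnn; rewrite !inordK //; lia.
  have ab : S (inord k2) (inord k2) <= S (inord k1) (inord k1).
    by apply: hord; rewrite ?inordK //; lia.
  by rewrite !expr2; apply: ler_pM.
have -> : \sum_(j < r) \sum_(b < n.+1) S (inord j) b ^+ 2 = \sum_(0 <= k < r) g k.
  by rewrite big_mkord.
rewrite F1 (big_cat_nat _ (n := n.+1)) //= [X in _ + X]big_nat_cond [X in _ + X]big1 ?addr0;
  last by move=> k /andP[/andP[h1 h2] _]; apply: F3.
rewrite (big_cat_nat _ (n := r)) //=.
set A := \sum_(0 <= k < r) g k; set B := \sum_(r <= k < n.+1) g k.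
set c := g r.-1.
have hA : r%:R * c <= A.
  have -> : r%:R * c = \sum_(0 <= k < r) c by rewrite sumr_const_nat subn0 mulr_natl.
  by apply: ler_sum_nat => k /andP[_ hk]; apply: F5; lia.
have hB : B <= (n.+1 - r)%:R * c.
  have -> : (n.+1 - r)%:R * c = \sum_(r <= k < n.+1) c by rewrite sumr_const_nat mulr_natl.
  apply: ler_sum_nat => k /andP[h1 h2]; apply: F5; lia.
have c0 : 0 <= c := g0 _.
rewrite natrB // in hB.
have hrn' : (r%:R : R) <= n.+1%:R by rewrite ler_nat.
have r0 : (0 : R) <= r%:R by [].
rewrite mulrAC ler_pdivrMr ?ltr0Sn //.
nra.
Qed.
Lemma svd_bound (R : realType) m n r (D : 'M[R]_(m, n)) (P : 'M[R]_(m, r)) :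
  (n <= m)%N -> (1 <= r)%N -> (r <= n)%N -> is_top_left_sv D P ->
  (r%:R / n%:R) * frob2 D <= frob2 (P^T *m D).
Proof.
destruct n as [|n]; first by move=> _ h1 h2; lia.
destruct m as [|m]; first by move=> h; lia.
move=> hnm hr1 hrn [U [S [V [hU [hV [hD [hdiag [hnn [hord hP]]]]]]]]].
have -> : frob2 D = frob2 S by rewrite hD frob2_mulVT // frob2_mulU.
have -> : frob2 (P^T *m D) = \sum_(j < r) \sum_(b < n.+1) S (inord j) b ^+ 2.
  rewrite hD !mulmxA frob2_mulVT //.
  have E : P^T *m U = \matrix_(j, c) (1%:M : 'M[R]_m.+1) (inord j) c.
    apply/matrixP => j c; rewrite mxE -hU !mxE; apply: eq_bigr => a _.
    rewrite !mxE (hP a j (inord j)) // inordK //; move: (ltn_ord j); lia.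
  rewrite /frob2; apply: eq_bigr => j _; apply: eq_bigr => b _; congr (_ ^+ 2).
  rewrite E -[in RHS](mul1mx S) !mxE; apply: eq_bigr => c _; rewrite mxE //.
exact: diag_bound.
Qed.
Definition ebar {R : realType} {m n r N} (st : pstate R m n r N) : 'M[R]_(m, n) :=
  (N%:R)^-1 *: \sum_(i < N) pE st i.
Lemma ebar_step (R : realType) m n r N tau (eta mu : R) dX (Xi : measurableType dX)
  (gradF : 'M[R]_(m, n) -> Xi -> 'M[R]_(m, n)) (qrf : 'M[R]_(m, r) -> 'M[R]_(m, r)) (svf : 'M[R]_(m, n) -> 'M[R]_(m, r)) t (st : pstate R m n r N) (xs : 'I_N -> Xi) :
  let Dm := (N%:R)^-1 *: \sum_(i < N) (gradF (pX st) (xs i) + pE st i) in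
  let Pt := if (t %% tau == 0)%N then svf Dm
            else qrf ((N%:R)^-1 *: \sum_(i < N) ((gradF (pX st) (xs i) + pE st i) *m pQ st)) in
  ebar (pstep tau eta mu gradF qrf svf t st xs) = Dm - Pt *m Pt^T *m Dm.
Proof.
move=> Dm Pt.
rewrite /ebar /pstep /= -/Dm -/Pt.
rewrite sumrB scalerBr; congr (_ - _).
by rewrite -mulmx_sumr scalemxAr.
Qed.
Lemma top_sv_orth (R : realType) m n r (D : 'M[R]_(m, n)) (P : 'M[R]_(m, r)) :
  (n <= m)%N -> (r <= n)%N -> is_top_left_sv D P -> P^T *m P = 1%:M.
Proof.
move=> hnm hrn [U [S [V [hU [_ [_ [_ [_ [_ hP]]]]]]]]].
have hrm : (r <= m)%N by lia.
apply/matrixP => j k.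
have := congr1 (fun M : 'M[R]_m => M (widen_ord hrm j) (widen_ord hrm k)) hU.
rewrite /= !mxE => <-; apply: eq_bigr => a _.
by rewrite !mxE (hP a j (widen_ord hrm j)) // (hP a k (widen_ord hrm k)).
Qed.
Lemma step_bound (R : realType) m n r N tau (eta mu : R) dX (Xi : measurableType dX)
  (gradF : 'M[R]_(m, n) -> Xi -> 'M[R]_(m, n)) (qrf : 'M[R]_(m, r) -> 'M[R]_(m, r))
  (svf : 'M[R]_(m, n) -> 'M[R]_(m, r)) t (st : pstate R m n r N) (xs : 'I_N -> Xi) (x : R) :
  (n <= m)%N -> (1 <= r)%N -> (r <= n)%N ->
  (forall A, is_QR_factor A (qrf A)) -> (forall D, is_top_left_sv D (svf D)) -> 0 < x ->
  frob2 (ebar (pstep tau eta mu gradF qrf svf t st xs)) <=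
  (if (t %% tau == 0)%N then 1 - r%:R / n%:R else 1) *
   ((1 + x^-1) * frob2 (ebar st) +
    (1 + x) * frob2 ((N%:R)^-1 *: \sum_(i < N) gradF (pX st) (xs i))).
Proof.
move=> hnm hr1 hrn hqr hsv x0.
rewrite ebar_step.
set gb := (N%:R)^-1 *: \sum_(i < N) gradF (pX st) (xs i).
set Dm := (N%:R)^-1 *: \sum_(i < N) (gradF (pX st) (xs i) + pE st i).
have hD : Dm = ebar st + gb by rewrite /Dm big_split scalerDr addrC.
have Y : frob2 Dm <= (1 + x^-1) * frob2 (ebar st) + (1 + x) * frob2 gb.
  by rewrite hD; have := frob2_young (ebar st) gb (g := x^-1); rewrite invr_gt0 invrK; apply.
case: ifP => ht.
- have hP := hsv Dm.
  rewrite frob2_proj; last exact: top_sv_orth hnm hrn hP.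
  have := svd_bound hnm hr1 hrn hP.
  have d1 : r%:R / n%:R <= (1 : R).
    have n0 : (0 : R) < n%:R by rewrite ltr0n; lia.
    by rewrite ler_pdivrMr // mul1r ler_nat.
  have f0 := frob2_ge0 Dm.
  move=> h; apply: le_trans (_ : (1 - r%:R / n%:R) * frob2 Dm <= _).
    by rewrite mulrBl mul1r lerB.
  by apply: ler_wpM2l => //; rewrite subr_ge0.
- have [hQ _] := hqr ((N%:R)^-1 *: \sum_(i < N) ((gradF (pX st) (xs i) + pE st i) *m pQ st)).
  rewrite frob2_proj // mul1r; apply: le_trans Y.
  by rewrite lerBlDr lerDl frob2_ge0.
Qed.
Import HBNNSimple.
Lemma le_integral_nm (R : realType) d (T : measurableType d) (mu : {measure set T -> \bar R}) (f1 f2 : T -> \bar R) :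
  (forall x, (0 <= f1 x)%E) -> (forall x, (f1 x <= f2 x)%E) -> (\int[mu]_x f1 x <= \int[mu]_x f2 x)%E.
Proof.
move=> f10 f12.
have f20 x : (0 <= f2 x)%E by apply: le_trans (f12 x).
rewrite !ge0_integralE //=.
apply: ge_ereal_sup => _ [h /= hf <-].
apply: ereal_sup_ubound; exists h => //= x.
apply: le_trans (hf x) _.
rewrite /patch /=; case: ifP => //.
Qed.
Lemma iterE_ge0 (R : realType) dO (Om : measurableType dO) (P : probability Om R) k h :
  (forall l, (0 <= h l)%E) -> (0 <= iterE P k h)%E.
Proof.
elim: k h => [|k IH] h h0 /=; first exact: h0.
by apply: integral_ge0 => w _; apply: IH.
Qed.
Lemma sum_meas (R : realType) d (T : measurableType d) I (s : seq I) (Pr : pred I)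
  (F : I -> T -> R) : (forall i, measurable_fun setT (F i)) ->
  measurable_fun setT (fun w => \sum_(i <- s | Pr i) F i w).
Proof.
move=> hF; elim: s => [|i s IH].
  by under eq_fun do rewrite big_nil; exact: measurable_cst.
under eq_fun do rewrite big_cons.
case: (Pr i) => //.
exact: measurable_realfun.measurable_funD.
Qed.
Lemma frob2_meas (R : realType) d (T : measurableType d) p q (f : T -> 'M[R]_(p, q)) :
  mx_measurable f -> measurable_fun setT (fun w => frob2 (f w)).
Proof.
move=> hf; rewrite /frob2; apply: sum_meas => i; apply: sum_meas => j.
under eq_fun do rewrite expr2.
exact: measurable_realfun.measurable_funM.
Qed.
Lemma mx_meas_scale_sum (R : realType) d (T : measurableType d) p q N (c : R)
  (F : 'I_N -> T -> 'M[R]_(p, q)) : (forall i, mx_measurable (F i)) ->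
  mx_measurable (fun w => c *: \sum_(i < N) F i w).
Proof.
move=> hF a b; under eq_fun do rewrite mxE summxE.
apply: measurable_realfun.measurable_funM; first exact: measurable_cst.
by apply: sum_meas => i; apply: hF.
Qed.
Lemma int_affine (R : realType) d (T : measurableType d) (P : probability T R) (g : T -> R)
  (al be G : R) : measurable_fun setT g -> (forall w, 0 <= g w) -> 0 <= al -> 0 <= be ->
  (\int[P]_w (g w)%:E <= G%:E)%E -> (\int[P]_w (al + be * g w)%:E <= (al + be * G)%:E)%E.
Proof.
move=> mg g0 al0 be0 hG.
under eq_integral do rewrite EFinD EFinM.
rewrite ge0_integralD //; last first.
  apply/measurable_realfun.measurable_EFinP.
  by apply: measurable_realfun.measurable_funM => //; exact: measurable_cst.
all: try (by move=> w _; rewrite lee_fin //; apply: mulr_ge0).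
rewrite integral_cst //.
set u := (X in (al%:E * X)%E).
have -> : u = 1%E by exact: probability_setT.
rewrite mule1 ge0_integralZl_EFin //; last 2 first.
- by move=> w _; rewrite lee_fin.
- exact/measurable_realfun.measurable_EFinP.
rewrite EFinD EFinM leeD2l // lee_pmul //.
by apply: integral_ge0 => w _; rewrite lee_fin.
Qed.
Lemma mod_fact1 (tau t0 : nat) : (1 <= tau)%N -> ((t0.+1 + tau - 1) %% tau = t0 %% tau)%N.
Proof. move=> h; have -> : (t0.+1 + tau - 1 = t0 + tau)%N by lia. by rewrite modnDr. Qed.
Lemma mod_fact2 (tau t0 : nat) : (1 <= tau)%N -> (t0 %% tau = 0)%N -> ((t0 + tau - 1) %% tau = tau - 1)%N.
Proof.
move=> h1 h2; have e := divn_eq t0 tau; rewrite h2 addn0 in e.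
rewrite e -addnBA // modnMDl modn_small //; lia.
Qed.
Lemma mod_fact3 (tau t0 : nat) : (1 <= tau)%N -> (t0 %% tau <> 0)%N -> (((t0 + tau - 1) %% tau).+1 = t0 %% tau)%N.
Proof.
move=> h1 h2; case: t0 h2 => [|t] h2; first by rewrite mod0n in h2.
have -> : (t.+1 + tau - 1 = t + tau)%N by lia.
rewrite modnDr; move: h2; rewrite modnS; case: ifP => //.
Qed.
Lemma arith_step (R : realType) (tau t0 : nat) (de s : R) : (1 <= tau)%N -> 0 < de -> de <= 1 ->
  s * de = 2 * tau%:R -> 0 < s ->
  (if (t0 %% tau == 0)%N then 1 - de else 1) * (1 + (s + ((t0 + tau - 1) %% tau)%:R)) ^+ 2
   <= (s + ((t0.+1 + tau - 1) %% tau)%:R) ^+ 2.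
Proof.
move=> ht de0 de1 hs s0.
rewrite mod_fact1 //; case: ifP => /eqP hp.
- rewrite mod_fact2 // hp addr0 natrB // .
  have t1 : (1 : R) <= tau%:R by rewrite ler1n.
  set T := tau%:R in hs t1 *.
  have h1 : de * s * s = 2 * T * s by rewrite (mulrC de) hs.
  have h2 : de * s * T = 2 * T * T by rewrite (mulrC de) hs.
  have -> : 1 + (s + (T - 1)) = s + T by ring.
  nra.
- rewrite -(mod_fact3 ht hp) mul1r.
  by rewrite -natr1 (addrC 1) addrA.
Qed.
Lemma arith_base (R : realType) (tau t0 : nat) (s : R) : (1 <= tau)%N -> 0 <= s ->
  (s + ((t0 + tau - 1) %% tau)%:R) ^+ 2 <= (s + (tau - 1)%:R) ^+ 2.
Proof.
move=> ht s0; have h : ((t0 + tau - 1) %% tau <= tau - 1)%N.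
  have := ltn_pmod (t0 + tau - 1) ht; lia.
have : ((t0 + tau - 1) %% tau)%:R <= (tau - 1)%:R :> R by rewrite ler_nat.
set a := _%:R; set b := _%:R; have a0 : 0 <= a by [].
move=> hab; nra.
Qed.
Lemma arith_final (R : realType) (tau : nat) (de s G : R) : (1 <= tau)%N -> 0 < de -> de <= 1 ->
  s * de = 2 * tau%:R -> 0 <= G ->
  (s + (tau - 1)%:R) ^+ 2 * G <= 45 * tau%:R ^+ 2 * G / de ^+ 2.
Proof.
move=> ht de0 de1 hs G0.
have t1 : (1 : R) <= tau%:R by rewrite ler1n.
rewrite natrB //; set T := tau%:R in hs t1 *.
have hs' : s = 2 * T / de by rewrite -hs mulrK // unitfE gt_eqF.
set y := T / de.
have hy : T <= y by rewrite /y ler_pdivlMr //; nra.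
have -> : 45 * T ^+ 2 * G / de ^+ 2 = 45 * y ^+ 2 * G by rewrite /y; field; rewrite gt_eqF.
have -> : s = 2 * y by rewrite hs' /y mulrA.
apply: ler_wpM2r => //.
nra.
Qed.
Unset Implicit Arguments.
Set Strict Implicit.
Theorem lemma3 (R : realType) (m n r N tau : nat) (eta mu : R)
  (dX : measure_display) (Xi : measurableType dX)
  (dO : measure_display) (Om : measurableType dO) (P : probability Om R)
  (xi : 'I_N -> Om -> Xi)
  (gradF : 'M[R]_(m, n) -> Xi -> 'M[R]_(m, n))
  (qrf : 'M[R]_(m, r) -> 'M[R]_(m, r))
  (svf : 'M[R]_(m, n) -> 'M[R]_(m, r))
  (sigma omega : R)
  (X0 : 'M[R]_(m, n)) (Qinit : 'M[R]_(n, r)) :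
  (0 < N)%N -> (n <= m)%N -> (1 <= r)%N -> (r <= n)%N ->
  0 <= mu -> mu < 1 -> (1 <= tau)%N -> 0 < eta ->
  (* the QR and top-r SVD routines do what they claim *)
  (forall A, is_QR_factor A (qrf A)) ->
  (forall D, is_top_left_sv D (svf D)) ->
  (* measurability (implicit in the paper) *)
  (forall i, measurable_fun setT (xi i)) ->
  oracle_measurable gradF -> mx_borel qrf -> mx_borel svf ->
  (* the N samples of a round are independent (rounds are independent by
     construction of [iterE]) *)
  mutually_independent P xi ->
  (* Assumption (A3) *)
  (forall i X a b, P.-integrable setT (fun w => (gradF X (xi i w) a b)%:E)) ->
  (forall X, frob2 ((N%:R)^-1 *: \sum_(i < N) gradf gradF P xi i X) <= omega ^+ 2) ->
  (forall i X, (\int[P]_w (frob2 (gradF X (xi i w) - gradf gradF P xi i X))%:E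
                 <= (sigma ^+ 2)%:E)%E) ->
  (forall X, (\int[P]_w (frob2 ((N%:R)^-1 *: \sum_(i < N) gradF X (xi i w)))%:E
                 <= (sigma ^+ 2 + omega ^+ 2)%:E)%E) ->
  (* conclusion, for every t *)
  forall t : nat,
    (iterE P t (fun l =>
       (frob2 ((N%:R)^-1 *: \sum_(i < N)
          pE (prun tau eta mu gradF qrf svf xi 0
                (PState X0 Qinit 0 (fun _ => 0)) l) i))%:E)
     <= (45 * (tau%:R) ^+ 2 * (sigma ^+ 2 + omega ^+ 2)
          / ((r%:R / n%:R) ^+ 2))%:E)%E.
Proof.
move=> hN hnm hr1 hrn mu0 mu1 htau eta0 hqr hsv hxi hor _ _ _ _ _ _ hG t.
set G := sigma ^+ 2 + omega ^+ 2.
have G0 : 0 <= G by rewrite addr_ge0 // sqr_ge0.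
set de := r%:R / n%:R.
have n0 : (0:R) < n%:R by rewrite ltr0n; lia.
have de0 : 0 < de by rewrite divr_gt0 // ltr0n.
have de1 : de <= 1 by rewrite ler_pdivrMr // mul1r ler_nat.
set s := 2 * tau%:R / de.
have hs : s * de = 2 * tau%:R by rewrite /s divfK // gt_eqF.
have s0 : 0 < s by rewrite /s divr_gt0 // mulr_gt0 // ltr0n.
pose xf t0 := s + ((t0 + tau - 1) %% tau)%:R.
pose M t0 := xf t0 ^+ 2 * G.
set K := (s + (tau - 1)%:R) ^+ 2 * G.
pose F (st : pstate R m n r N) := (frob2 (ebar st))%:E.
have claim : forall k t0, exists a b : R, [/\ 0 <= a, 0 <= b, b + a * M t0 <= K &
   forall st, (iterE P k (fun l => F (prun tau eta mu gradF qrf svf xi t0 st l))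
      <= (a * frob2 (ebar st) + b)%:E)%E].
  elim => [|k IH] t0.
    exists 1, 0; split => //.
      rewrite add0r mul1r /M /K; apply: ler_wpM2r => //.
      by apply: arith_base => //; exact: ltW.
    by move=> st /=; rewrite mul1r addr0.
  have [a [b [a0 b0 hK hJ]]] := IH t0.+1.
  set x := xf t0.
  have x0 : 0 < x by rewrite /x /xf ltr_wpDr.
  set c := if (t0 %% tau == 0)%N then 1 - de else 1.
  have c0 : 0 <= c by rewrite /c; case: ifP => _; lra.
  exists (a * (c * (1 + x^-1))), (b + a * (c * (1 + x)) * G).
  split.
  - by rewrite mulr_ge0 // mulr_ge0 // addr_ge0 // invr_ge0 ltW.
  - by rewrite addr_ge0 // mulr_ge0 // mulr_ge0 // mulr_ge0 // addr_ge0 // ltW.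
  - have hst : c * (1 + x) ^+ 2 <= xf t0.+1 ^+ 2 by apply: arith_step.
    have e : a * (c * (1 + x)) * G + a * (c * (1 + x^-1)) * M t0 =
             a * (c * (1 + x) ^+ 2 * G).
      by rewrite /M -/x; field; rewrite gt_eqF.
    rewrite -addrA e; apply: le_trans hK; rewrite lerD2l.
    by apply: ler_wpM2l => //; rewrite /M; apply: ler_wpM2r.
  - move=> st /=.
    apply: le_trans.
      apply: (@le_integral_nm _ _ _ P _ (fun w =>
       (a * frob2 (ebar (pstep tau eta mu gradF qrf svf t0 st (fun i => xi i w))) + b)%:E)).
      + by move=> w; apply: iterE_ge0 => l; rewrite /F lee_fin frob2_ge0.
      + by move=> w; apply: hJ.
    apply: le_trans.
      apply: (@le_integral_nm _ _ _ P _ (fun w =>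
       ((a * (c * (1 + x^-1)) * frob2 (ebar st) + b) + (a * (c * (1 + x))) *
         frob2 ((N%:R)^-1 *: \sum_(i < N) gradF (pX st) (xi i w)))%:E)).
    + by move=> w; rewrite lee_fin addr_ge0 // mulr_ge0 // frob2_ge0.
    + move=> w; rewrite lee_fin.
      have h := @step_bound _ _ _ _ _ tau eta mu _ _ gradF qrf svf t0 st (fun i => xi i w) x hnm hr1 hrn hqr hsv x0.
      have h2 := ler_wpM2l a0 h.
      rewrite -/c in h2.
      rewrite addrAC lerD2r; apply: le_trans h2 _; rewrite le_eqVlt; apply/orP; left; apply/eqP; ring.
    have mg : measurable_fun setT
        (fun w => frob2 ((N%:R)^-1 *: \sum_(i < N) gradF (pX st) (xi i w))).
      apply: frob2_meas; apply: mx_meas_scale_sum => i.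
      apply: (hor _ _ (fun _ => pX st) (xi i)); last exact: hxi.
      by move=> a1 b1; exact: measurable_cst.
    have g0 : forall w, 0 <= frob2 ((N%:R)^-1 *: \sum_(i < N) gradF (pX st) (xi i w)).
      by move=> w; exact: frob2_ge0.
    have al0 : 0 <= a * (c * (1 + x^-1)) * frob2 (ebar st) + b.
      apply: addr_ge0 => //; apply: mulr_ge0; last exact: frob2_ge0.
      by rewrite mulr_ge0 // mulr_ge0 // addr_ge0 // invr_ge0 ltW.
    have be0 : 0 <= a * (c * (1 + x)).
      by rewrite mulr_ge0 // mulr_ge0 // addr_ge0 // ltW.
    apply: le_trans (int_affine mg g0 al0 be0 (hG (pX st))) _.
    rewrite lee_fin le_eqVlt; apply/orP; left; apply/eqP; rewrite /G /x /xf; ring.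
have [a [b [a0 b0 hK hJ]]] := claim t 0%N.
have := hJ (PState X0 Qinit 0 (fun _ => 0)).
have -> : frob2 (ebar (PState X0 Qinit 0 (fun _ : 'I_N => 0))) = 0.
  rewrite /ebar /= big1 // scaler0 /frob2 big1 // => i _.
  by rewrite big1 // => j _; rewrite mxE expr0n.
move=> h; apply: le_trans h _.
rewrite lee_fin mulr0 add0r.
apply: le_trans (_ : b <= K) _.
  apply: le_trans hK; rewrite lerDl; apply: mulr_ge0 => //.
  by rewrite /M mulr_ge0 // sqr_ge0.
exact: arith_final.
Qed.
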